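(* Let $j\ge0$ be an integer and $\beta$ a real number, and for $x\in\mathbb R^d$, $t\neq0$, put $r=\|x\|$ and $$H_j^{(\beta)}(x,t)=(t^2-\|x\|^2)\,t^{2j}\,P_j^{(1,\beta)}\!\left(2\frac{r^2}{t^2}-1\right).$$ Then $$\frac{\partial}{\partial t}H_j^{(\beta)}(x,t)=2(j+1)\,t^{2j+1}P_j^{(0,\beta)}\!\left(2\frac{r^2}{t^2}-1\right),$$ $$\frac{\partial^2}{\partial t^2}H_j^{(\beta)}(x,t)=2(j+1)(4j+2\beta+3)\,t^{2j}P_j^{(0,\beta)}\!\left(2\frac{r^2}{t^2}-1\right)-4(j+1)(j+\beta+1)\,t^{2j}P_j^{(1,\beta)}\!\left(2\frac{r^2}{t^2}-1\right).$$
   Context: $P_n^{(\alpha,\beta)}$ denotes the Jacobi polynomial $P_n^{(\alpha,\beta)}(s)=\sum_{k=0}^n \frac{(\alpha+k+1)_{n-k}(n+\alpha+\beta+1)_k}{k!\,(n-k)!}\left(\frac{s-1}{2}\right)^k$, with $(a)_k$ the Pochhammer symbol. *)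

(* Defs.v *)
From HB Require Import structures.
From mathcomp Require Import all_boot all_order all_algebra.
From mathcomp Require Import all_classical all_reals all_analysis.
Set Implicit Arguments. Unset Strict Implicit. Unset Printing Implicit Defensive.
Import Order.TTheory GRing.Theory Num.Theory.
Local Open Scope ring_scope.

Definition pochhammer {R : ringType} (a : R) (k : nat) : R :=
  \prod_(i < k) (a + i%:R).

Definition jacobiP {R : realType} (n : nat) (al be s : R) : R :=
  \sum_(k < n.+1)
    (pochhammer (al + k%:R + 1) (n - k) * pochhammer (n%:R + al + be + 1) k)
      / ((k`!)%:R * ((n - k)`!)%:R) * ((s - 1) / 2) ^+ k.

Definition sqnorm {R : realType} {d : nat} (x : 'rV[R]_d) : R :=
  \sum_(i < d) x ord0 i ^+ 2.

Definition Hfun {R : realType} {d : nat} (j : nat) (be : R) (x : 'rV[R]_d) (t : R) : R :=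
  (t ^+ 2 - sqnorm x) * t ^+ (2 * j) * jacobiP j 1 be (2 * sqnorm x / t ^+ 2 - 1).

(* Main.v *)
Require Import Defs.
From HB Require Import structures.
From mathcomp Require Import all_boot all_order all_algebra.
From mathcomp Require Import all_classical all_reals all_analysis.
From mathcomp Require Import ring lra zify.
Import Order.TTheory GRing.Theory Num.Theory.
Import numFieldNormedType.Exports.
Local Open Scope ring_scope.

Lemma poch_recr {R : realType} (x : R) k : pochhammer x k.+1 = pochhammer x k * (x + k%:R).
Proof. by rewrite /pochhammer big_ord_recr. Qed.
Lemma poch_recl {R : realType} (x : R) k : pochhammer x k.+1 = x * pochhammer (x + 1) k.
Proof.
rewrite /pochhammer big_ord_recl addr0; congr (_ * _); apply: eq_bigr => i _.
rewrite lift0 /= -addn1 natrD; ring.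
Qed.
Lemma poch_fact {R : realType} m n :
  pochhammer (m%:R + 1 : R) n = ((m+n)`!)%:R / (m`!)%:R.
Proof.
elim: n => [|n IH]; first by rewrite /pochhammer big_ord0 addn0 divff // pnatr_eq0 -lt0n fact_gt0.
rewrite poch_recr IH addnS factS natrM -addn1 !natrD.
have h : (m`!)%:R != 0 :> R by rewrite pnatr_eq0 -lt0n fact_gt0.
field => //.
Qed.

Definition jc {R : realType} (j : nat) (al be : R) (k : nat) : R :=
  (pochhammer (al + k%:R + 1) (j - k) * pochhammer (j%:R + al + be + 1) k)
      / ((k`!)%:R * ((j - k)`!)%:R).

Lemma fnz {R : realType} n : (n`!)%:R != 0 :> R.
Proof. by rewrite pnatr_eq0 -lt0n fact_gt0. Qed.
Lemma snz {R : realType} n : (n.+1)%:R != 0 :> R.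
Proof. by rewrite pnatr_eq0. Qed.

Lemma C1 {R : realType} i n (be : R) :
  jc (i + n.+1) 1 be i.+1 *+ i.+2 - (i + n.+1)%:R * jc (i + n.+1) 1 be i
  + jc (i + n.+1) 1 be i *+ i = (i + n.+1).+1%:R * jc (i + n.+1) 0 be i.+1.
Proof.
rewrite /jc.
have -> : (i + n.+1 - i.+1 = n)%N by lia.
have -> : (i + n.+1 - i = n.+1)%N by lia.
have -> : (1 + i.+1%:R + 1 : R) = (i.+2)%:R + 1 by rewrite -!natr1; ring.
have -> : (1 + i%:R + 1 : R) = (i.+1)%:R + 1 by rewrite -!natr1; ring.
have -> : (0 + i.+1%:R + 1 : R) = (i.+1)%:R + 1 by ring.
rewrite !poch_fact poch_recr poch_recl.
have -> : (i + n.+1)%:R + 0 + be + 1 + 1 = (i + n.+1)%:R + 1 + be + 1 by ring.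
set Q := pochhammer _ i.
rewrite ?addSn ?addnS !factS.
have := @fnz R n; have := @fnz R i; have := @fnz R (i+n).
have := @snz R n; have := @snz R i; have := @snz R i.+1;  have := @snz R (i+n);  have := @snz R (i+n).+1.
move=> *.
field.
repeat (apply/andP; split); try exact: fnz; apply: lt0r_neq0;
  move: (ler0n R i) (ler0n R n) => ? ?; lra.
Qed.

Lemma lin {R : realType} (u v L Rr K : R) : u = v -> L - Rr = K * (u - v) -> L = Rr.
Proof. by move=> -> /eqP; rewrite subrr mulr0 subr_eq0 => /eqP. Qed.

Lemma poch_shift {R : realType} (x : R) k : x * pochhammer (x+1) k = pochhammer x k * (x + k%:R).
Proof. by rewrite -poch_recl poch_recr. Qed.

Lemma poch0 {R : realType} (x : R) : pochhammer x 0 = 1.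
Proof. by rewrite /pochhammer big_ord0. Qed.

Lemma C0 {R : realType} j (be : R) : jc j 1 be 0 = j.+1%:R * jc j 0 be 0.
Proof.
rewrite /jc !subn0 !poch0.
have -> : (1 + 0%:R + 1 : R) = 1%N%:R + 1 by ring.
have -> : (0 + 0%:R + 1 : R) = 0%N%:R + 1 by ring.
rewrite !poch_fact.
rewrite !add1n factS.
have := @fnz R j; move=> ?.
field; by rewrite !fnz.
Qed.

Lemma C2 {R : realType} i n (be : R) :
  ((i + n.+1)%:R + be + 1) * jc (i + n.+1) 1 be i =
  ((i + n.+1)%:R + be + 1) * jc (i + n.+1) 0 be i + jc (i + n.+1) 0 be i *+ i
   + jc (i + n.+1) 0 be i.+1 *+ i.+1.
Proof.
have E := poch_shift ((i + n.+1)%:R + 0 + be + 1) i.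
rewrite /jc.
have -> : (i + n.+1 - i.+1 = n)%N by lia.
have -> : (i + n.+1 - i = n.+1)%N by lia.
have -> : (1 + i%:R + 1 : R) = (i.+1)%:R + 1 by rewrite -!natr1; ring.
have -> : (0 + i%:R + 1 : R) = i%:R + 1 by ring.
have -> : (0 + i.+1%:R + 1 : R) = (i.+1)%:R + 1 by ring.
rewrite !poch_fact poch_recl.
have -> : (i + n.+1)%:R + 1 + be + 1 = (i + n.+1)%:R + 0 + be + 1 + 1 by ring.
move: E.
set Q1 := pochhammer _ i.
set Q0 := pochhammer _ i.
set B := (i + n.+1)%:R + 0 + be + 1.
move=> E.
apply: (@lin R _ _ _ _ (((i + n.+1)`!)%:R / ((i`!)%:R * (i`!)%:R * (n`!)%:R * (n.+1)%:R)) E).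
rewrite /B ?addSn ?addnS !factS.
have := @fnz R n; have := @fnz R i; have := @fnz R (i+n).
have := @snz R n; have := @snz R i; have := @snz R i.+1;  have := @snz R (i+n);  have := @snz R (i+n).+1.
move=> *.
field.
repeat (apply/andP; split); try exact: fnz; apply: lt0r_neq0;
  move: (ler0n R i) (ler0n R n) => ? ?; lra.
Qed.

Lemma C3 {R : realType} j (be : R) :
  (j%:R + be + 1) * jc j 1 be j =
  (j%:R + be + 1) * jc j 0 be j + jc j 0 be j *+ j.
Proof.
have E := poch_shift (j%:R + 0 + be + 1) j.
rewrite /jc subnn !poch0.
have -> : j%:R + 1 + be + 1 = j%:R + 0 + be + 1 + 1 by ring.
move: E.
set Q1 := pochhammer _ j.
set Q0 := pochhammer _ j.
set B := j%:R + 0 + be + 1.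
move=> E.
apply: (@lin R _ _ _ _ (1 / (j`!)%:R) E).
rewrite /B.
have := @fnz R j => ?.
rewrite fact0 !mulr1. field; by rewrite !fnz.
Qed.

Definition jpoly {R : realType} j (al be : R) : {poly R} := \poly_(k < j.+1) jc j al be k.

Lemma coefXD {R : realType} (p : {poly R}) i : ('X * p^`())`_i = p`_i *+ i.
Proof. by rewrite coefXM coef_deriv; case: i => [|i] //=; rewrite mulr0n. Qed.

Lemma id1 {R : realType} j (be : R) :
  jpoly j 1 be - j%:R *: ('X * jpoly j 1 be) + 'X * ('X * (jpoly j 1 be)^`())
   + 'X * (jpoly j 1 be)^`() = (j.+1)%:R *: jpoly j 0 be.
Proof.
apply/polyP => i; rewrite !(coefD, coefB, coefN, coefZ, coefXD, coefXM).
case: i => [|i] /=.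
  by rewrite !coef_poly /= C0; ring.
rewrite ?coefXD !coef_poly.
case: (ltngtP i j) => hij.
- have [n En] : exists n, j = (i + n.+1)%N by exists (j - i.+1)%N; lia.
  have h1 : (i.+1 < j.+1)%N by lia.
  have h2 : (i < j.+1)%N by lia.
  rewrite h1 h2 En -C1; ring.
- have h1 : (i.+1 < j.+1)%N = false by lia.
  have h2 : (i < j.+1)%N = false by lia.
  rewrite h1 h2; ring.
- subst i; rewrite ltnn ltnSn; ring.
Qed.

Lemma id2 {R : realType} j (be : R) :
  (j%:R + be + 1) *: jpoly j 1 be =
  (j%:R + be + 1) *: jpoly j 0 be + 'X * (jpoly j 0 be)^`() + (jpoly j 0 be)^`().
Proof.
apply/polyP => i; rewrite !(coefD, coefZ, coefXD, coef_deriv) !coef_poly.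
case: (ltngtP i j) => hij.
- have [n En] : exists n, j = (i + n.+1)%N by exists (j - i.+1)%N; lia.
  have h1 : (i.+1 < j.+1)%N by lia.
  have h2 : (i < j.+1)%N by lia.
  by rewrite h1 h2 En C2.
- have h1 : (i.+1 < j.+1)%N = false by lia.
  have h2 : (i < j.+1)%N = false by lia.
  rewrite h1 h2; ring.
- subst i; rewrite ltnn ltnSn C3; ring.
Qed.

Lemma dpow {R : realType} (y : R) n : is_derive y 1 (fun z : R => z ^+ n) (n%:R * y ^+ n.-1).
Proof.
have -> : (fun z : R => z ^+ n) = horner 'X^n by apply/funext => z; rewrite hornerXn.
have H := (@is_derive_poly R (GRing.exp (polyX R) n) y).
eapply is_derive_eq; [exact H|].
by rewrite derivXn hornerMn hornerXn mulr_natl.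
Qed.

Lemma dwf {R : realType} (a y : R) : y != 0 ->
  is_derive y 1 (fun z : R => a * (z ^+ 2)^-1 - 1) (- 2 * a / y ^+ 3).
Proof.
move=> y0.
have h2 : y ^+ 2 != 0 by rewrite expf_neq0.
have dV := @is_deriveV R (fun z : R => z ^+ 2) y _ 1 h2 (dpow y 2).
have dZ := is_deriveZ a dV.
have dB := is_deriveB dZ (@is_derive_cst R R^o R^o (1 : R) y 1).
eapply is_derive_eq; [exact dB|].
have sE : forall u v : R, u *: v = u * v by []. rewrite !sE /=. field; exact: y0.
Qed.

Lemma powm1 {R : realType} (y : R) n : y != 0 -> n%:R * y ^+ n.-1 = n%:R * y ^+ n / y.
Proof. by move=> y0; case: n => [|n] /=; [rewrite !mul0r | rewrite exprS; field]. Qed.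

Lemma alg1 {R : realType} (j : nat) (y a T q1 p1 p0 : R) : y != 0 ->
  (y ^+ 2 - a) * T * (q1 * (-2 * a / y ^+ 3)) +
  p1 * ((y ^+ 2 - a) * ((2 * j)%:R * T / y) + T * (2 * y ^+ 1 - 0)) -
  2 * j.+1%:R * (y * T) * p0 =
  2 * y * T *
  (p1 - j%:R * ((a / y ^+ 2 - 1) * p1) +
   (a / y ^+ 2 - 1) * ((a / y ^+ 2 - 1) * q1) + (a / y ^+ 2 - 1) * q1 -
   j.+1%:R * p0).
Proof. move=> y0; field; exact: y0. Qed.

Lemma part1 {R : realType} j (be a y : R) : y != 0 ->
  is_derive y 1 (fun z => (z ^+ 2 - a) * z ^+ (2 * j) * (jpoly j 1 be).[a * (z ^+ 2)^-1 - 1])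
    (2 * (j.+1)%:R * y ^+ (2 * j + 1) * (jpoly j 0 be).[a * (y ^+ 2)^-1 - 1]).
Proof.
move=> y0.
have d1 := is_deriveB (dpow y 2) (@is_derive_cst R R^o R^o a y 1).
have d2 := dpow y (2 * j).
have d12 := is_deriveM d1 d2.
have dP := @is_derive1_comp R (horner (jpoly j 1 be)) (fun z : R => a * (z ^+ 2)^-1 - 1) y _ _
   (is_derive_poly _ _) (@dwf R a y y0).
have d := is_deriveM d12 dP.
eapply is_derive_eq; [exact d|].
have sE : forall u v : R, u *: v = u * v by [].
rewrite !sE !fctE /=.
have E := congr1 (fun p => p.[a * (y ^+ 2)^-1 - 1]) (id1 j be).
rewrite /= !(hornerD, hornerN, hornerZ, hornerM, hornerX) in E.
rewrite powm1 // addn1 (exprS y (2 * j)).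
apply: (@lin R _ _ _ _ (2 * y * y ^+ (2 * j)) E).
move: (y ^+ (2 * j)) ((jpoly j 1 be)^`().[a / y ^+ 2 - 1]) ((jpoly j 1 be).[a / y ^+ 2 - 1]) ((jpoly j 0 be).[a / y ^+ 2 - 1]) => T q1 p1 p0.
exact: alg1.
Qed.

Lemma alg2 {R : realType} (j : nat) (be y a T q0 p1 p0 : R) : y != 0 ->
  (2 * j.+1%:R) * (y * T) * (q0 * (-2 * a / y ^+ 3)) +
  p0 * (2 * j.+1%:R * ((2 * j).+1%:R * T)) -
  (2 * j.+1%:R * (4 * j%:R + 2 * be + 3) * T * p0 -
   4 * j.+1%:R * (j%:R + be + 1) * T * p1) =
  4 * j.+1%:R * T *
  ((j%:R + be + 1) * p1 - ((j%:R + be + 1) * p0 + (a / y ^+ 2 - 1) * q0 + q0)).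
Proof. move=> y0; field; exact: y0. Qed.

Lemma part2 {R : realType} j (be a y : R) : y != 0 ->
  is_derive y 1 (fun z => 2 * (j.+1)%:R * z ^+ (2 * j + 1) * (jpoly j 0 be).[a * (z ^+ 2)^-1 - 1])
    (2 * (j.+1)%:R * (4 * j%:R + 2 * be + 3) * y ^+ (2 * j)
        * (jpoly j 0 be).[a * (y ^+ 2)^-1 - 1]
     - 4 * (j.+1)%:R * (j%:R + be + 1) * y ^+ (2 * j)
        * (jpoly j 1 be).[a * (y ^+ 2)^-1 - 1]).
Proof.
move=> y0.
have dc := is_deriveZ (2 * (j.+1)%:R) (dpow y (2 * j + 1)).
have dP := @is_derive1_comp R (horner (jpoly j 0 be)) (fun z : R => a * (z ^+ 2)^-1 - 1) y _ _
   (is_derive_poly _ _) (@dwf R a y y0).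
have d := is_deriveM dc dP.
eapply is_derive_eq; [exact d|].
have sE : forall u v : R, u *: v = u * v by [].
rewrite !sE !fctE /=.
have E := congr1 (fun p => p.[a * (y ^+ 2)^-1 - 1]) (id2 j be).
rewrite /= !(hornerD, hornerN, hornerZ, hornerM, hornerX) in E.
rewrite addn1 /= (exprS y (2 * j)).
apply: (@lin R _ _ _ _ (4 * (j.+1)%:R * y ^+ (2 * j)) E).
move: (y ^+ (2 * j)) ((jpoly j 0 be)^`().[a / y ^+ 2 - 1]) ((jpoly j 1 be).[a / y ^+ 2 - 1]) ((jpoly j 0 be).[a / y ^+ 2 - 1]) => T q0 p1 p0.
rewrite sE; exact: alg2.
Qed.

Lemma argE_l {R : realType} (a z : R) : (2 * a / z ^+ 2 - 1 - 1) / 2 = a * (z ^+ 2)^-1 - 1.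
Proof. move: (z ^+ 2)^-1 => u; by field. Qed.

Theorem lemma2p4 (R : realType) (d j : nat) (be : R) (x : 'rV[R]_d) (t : R) :
  t != 0 ->
  is_derive t 1 (Hfun j be x)
    (2 * (j.+1)%:R * t ^+ (2 * j + 1) * jacobiP j 0 be (2 * sqnorm x / t ^+ 2 - 1))
  /\
  is_derive t 1 (derive1 (Hfun j be x))
    (2 * (j.+1)%:R * (4 * j%:R + 2 * be + 3) * t ^+ (2 * j)
        * jacobiP j 0 be (2 * sqnorm x / t ^+ 2 - 1)
     - 4 * (j.+1)%:R * (j%:R + be + 1) * t ^+ (2 * j)
        * jacobiP j 1 be (2 * sqnorm x / t ^+ 2 - 1)).
Proof.
move=> t0.
set a := sqnorm x.
have argE : forall z : R, (2 * a / z ^+ 2 - 1 - 1) / 2 = a * (z ^+ 2)^-1 - 1.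
  by move=> z; exact: argE_l.
have jac : forall al s, jacobiP j al be s = (jpoly j al be).[(s - 1) / 2].
  by move=> al s; rewrite /jpoly horner_poly.
have hH : Hfun j be x =
    (fun z => (z ^+ 2 - a) * z ^+ (2 * j) * (jpoly j 1 be).[a * (z ^+ 2)^-1 - 1]).
  by apply/funext => z; rewrite /Hfun jac argE.
rewrite hH !jac !argE; split; first exact: part1.
have nz : \forall z \near t, z != 0.
  by apply: (@cvgr_neq0 R R^o R (nbhs t) _ id t _ t0); exact: cvg_id.
eapply near_eq_is_derive; last exact (part2 j be a t t0).
near=> z.
have z0 : z != 0 by near: z; exact: nz.
by rewrite derive1E (@derive_val _ _ _ _ _ _ _ (part1 j be a z z0)).
Unshelve. all: by end_near.
Qed.
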